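(* For any instance oracle $f$ with $\max\{|f(G,v)|: G \text{ an } n\text{-node graph}, v\in G\}=O(n)$ and any deterministic exploration algorithm $A$, there exist a constant $c>0$ and infinitely many $n$ such that for each of them some $n$-node graph $G$ and starting node $v$ force the agent executing $A$ with input $f(G,v)$ from $v$ to make at least $c n^2$ edge traversals before completing exploration. That is, exploration takes time $\Omega(n^2)$ on some $n$-node graph, for arbitrarily large $n$.
   Context: Model: a graph is a simple connected undirected graph with $n$ nodes. Nodes are unlabeled; at each node of degree $d$ the incident edges carry distinct port numbers $0,\dots,d-1$, arbitrarily assigned. A mobile agent starts at some node. At each step, located at a node $u$ whose degree it knows, it chooses a port at $u$ and traverses the corresponding edge to a neighbor $w$; upon arrival it learns the port number of this edge at $w$ and the degree of $w$. The agent must visit all nodes and stop; the time of exploration is the number of edge traversals. A deterministic exploration algorithm receives as input a binary string (advice); its size is its length. An instance oracle is a function assigning a binary string $f(G,v)$ to each pair $(G,v)$ where $G$ is a port-numbered graph and $v$ is the starting node of the agent. *)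

(* Defs.v *)
From HB Require Import structures.
From mathcomp Require Import all_boot all_order all_algebra.
Set Implicit Arguments. Unset Strict Implicit. Unset Printing Implicit Defensive.

(* A port-numbered graph on n nodes (node names 'I_n exist only in the
   representation; the agent never sees them).  At node u the ports are
   0, ..., deg u - 1; port p at u leads to node [nbr u p] and the edge has
   port number [back u p] at that neighbour. Values of nbr/back at p >= deg u
   are irrelevant. *)
Record pgraph (n : nat) := PGraph {
  deg  : 'I_n -> nat;
  nbr  : 'I_n -> nat -> 'I_n;
  back : 'I_n -> nat -> nat
}.

Definition adjacent n (G : pgraph n) : rel 'I_n :=
  fun u w => has (fun p => nbr G u p == w) (iota 0 (deg G u)).

Definition wf_pgraph n (G : pgraph n) : Prop :=
  [/\
      (forall u p, p < deg G u ->
         [/\ back G u p < deg G (nbr G u p),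
             nbr G (nbr G u p) (back G u p) = u &
             back G (nbr G u p) (back G u p) = p]),
      (forall u p, p < deg G u -> nbr G u p != u),
      (forall u p q, p < deg G u -> q < deg G u -> nbr G u p = nbr G u q -> p = q) &
      (forall u w, connect (adjacent G) u w)].

(* A deterministic exploration algorithm: given the advice string, the degree
   of the starting node, and the history of observations so far (a list of
   triples (port taken, port of arrival at the new node, degree of the new
   node)), it either stops (None) or chooses a port (Some p). *)
Definition algorithm := seq bool -> nat -> seq (nat * nat * nat) -> option nat.

Definition oracle := forall n, pgraph n -> 'I_n -> seq bool.

(* Configuration after t traversals: current node and observation history;
   None if the algorithm has stopped before or chose a non-existing port. *)
Fixpoint run (A : algorithm) (adv : seq bool) n (G : pgraph n) (v : 'I_n)
    (t : nat) : option ('I_n * seq (nat * nat * nat)) :=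
  match t with
  | 0 => Some (v, [::])
  | t'.+1 =>
      match run A adv G v t' with
      | None => None
      | Some (u, h) =>
          match A adv (deg G v) h with
          | None => None
          | Some p =>
              if p < deg G u then
                Some (nbr G u p, rcons h (p, back G u p, deg G (nbr G u p)))
              else None
          end
      end
  end.

Definition explores_in (A : algorithm) (adv : seq bool) n (G : pgraph n)
    (v : 'I_n) (t : nat) : Prop :=
  (exists u h, run A adv G v t = Some (u, h) /\ A adv (deg G v) h = None) /\
  (forall w : 'I_n, exists s h, s <= t /\ run A adv G v s = Some (w, h)).

Definition linear_size_oracle (f : oracle) : Prop :=
  exists (C N0 : nat), forall n, N0 <= n ->
    forall (G : pgraph n) (v : 'I_n), wf_pgraph G -> size (f n G v) <= C * n.

(* Main.v *)
Require Import Defs.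
From HB Require Import structures.
From mathcomp Require Import all_boot all_order all_algebra.
From mathcomp Require Import zify ring.
From Stdlib Require Import Classical.
Set Implicit Arguments. Unset Strict Implicit. Unset Printing Implicit Defensive.

Lemma ffact_le_exp n m : n ^_ m <= n ^ m.
Proof.
elim: m => [|m IH]; first by rewrite ffactn0 expn0.
rewrite ffactnSr expnS mulnC leq_mul //; exact: leq_subr.
Qed.

Lemma bin_fact_le n m : 'C(n, m) * m`! <= n ^ m.
Proof. by rewrite bin_ffact ffact_le_exp. Qed.

Lemma exp2_fact i : 2 ^ i <= 2 * i`!.
Proof.
elim: i => [|i IH] //.
rewrite expnS factS.
case: i IH => [|i] IH //.
have : 2 * (2 * i.+1`!) <= 2 * (i.+2 * i.+1`!) by apply: leq_mul => //; apply: leq_mul.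
move: IH; lia.
Qed.

Lemma term_le k i : i <= k -> 'C(k, i) * k ^ (k - i) * 2 ^ i <= 2 * k ^ k.
Proof.
move=> ik.
apply: (@leq_trans ('C(k, i) * k ^ (k - i) * (2 * i`!))); first by rewrite leq_mul2l exp2_fact orbT.
rewrite mulnCA -mulnA [X in _ <= _ * X](_ : k ^ k = k ^ (k - i) * k ^ i); last by rewrite -expnD subnK.
rewrite leq_mul2l; apply/orP; right.
rewrite mulnCA leq_mul2l; apply/orP; right.
exact: bin_fact_le.
Qed.

Lemma geo_sum (a : nat -> nat) B N : (forall i, i < N -> a i * 2 ^ i <= B) ->
  (\sum_(i < N) a i) * 2 ^ N + 2 * B <= B * 2 ^ N.+1.
Proof.
elim: N => [|N IH] H; first by rewrite big_ord0 expn1; lia.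
rewrite big_ord_recr /= expnS.
have h1 := IH (fun i hi => H i (ltnW hi)).
have h2 := H N (ltnSn N).
move: h1 h2; set S := \sum_(i < N) a i; set P := 2 ^ N.
rewrite !expnS -/P; nia.
Qed.

Lemma succ_pow_le k : k.+1 ^ k <= 4 * k ^ k.
Proof.
have -> : k.+1 ^ k = \sum_(i < k.+1) ('C(k, i) * k ^ (k - i)).
  have e : k.+1 ^ k = (k + 1) ^ k by rewrite addn1.
  rewrite e expnDn; apply: eq_bigr => i _; by rewrite exp1n muln1.
have := @geo_sum (fun i => 'C(k, i) * k ^ (k - i)) (2 * k ^ k) k.+1.
have H : forall i, i < k.+1 -> 'C(k, i) * k ^ (k - i) * 2 ^ i <= 2 * k ^ k.
  by move=> i; rewrite ltnS; apply: term_le.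
move/(_ H) => {H}.
set S := \sum_(i < k.+1) _.
rewrite !expnS; set P := 2 ^ k; set Q := k ^ k.
have : 0 < P by rewrite expn_gt0.
nia.
Qed.

Lemma pow_fact k : k ^ k <= 4 ^ k * k`!.
Proof.
elim: k => [|k IH] //.
rewrite expnS factS.
have h := succ_pow_le k.
apply: (@leq_trans (k.+1 * (4 * k ^ k))); first by rewrite leq_mul2l h orbT.
rewrite expnS.
have : k.+1 * (4 * k ^ k) <= k.+1 * (4 * (4 ^ k * k`!)) by rewrite !leq_mul2l IH !orbT.
move=> h2; apply: (leq_trans h2); lia.
Qed.
Lemma chain_ineq (a f c p4 tm km Lp t10 : nat) :
 a <= p4 * f -> c * f <= tm -> a <= Lp * c -> tm * km <= t10 * (a * a) ->
 a * a * km <= p4 * Lp * t10 * (a * a).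
Proof.
move=> h1 h2 h3 h4.
have e1 : a * a * km <= (p4 * f) * (Lp * c) * km by rewrite leq_mul // leq_mul.
apply: (leq_trans e1).
have e2 : (p4 * f) * (Lp * c) * km = p4 * Lp * (c * f * km).
  ring.
rewrite e2 -[X in _ <= X]mulnA; apply: leq_mul => //; apply: leq_trans h4; exact: leq_mul.
Qed.

Lemma final_ineq (Cc m : nat) :
  0 < m -> 41 * 4 ^ (3 * Cc.+1) <= m ^ 2 ->
  (3 * Cc.+1 * m).+1 * 2 ^ (3 * Cc.+1 * m) * 'C(((3 * m) ^ 2 %/ (41 * 4 ^ (3 * Cc.+1))).+1, m) < m ^ m.
Proof.
set q := 4 ^ (3 * Cc.+1).
set K := 41 * q; set L := 3 * Cc.+1 * m.
set T := ((3 * m) ^ 2 %/ K).+1 => m0 Km.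
rewrite ltnNge; apply/negP => H.
have K0 : 0 < K by rewrite /K muln_gt0 expn_gt0.
have TK : T * K <= 10 * m ^ 2.
  rewrite /T mulSn addnC.
  have := leq_divM ((3 * m) ^ 2) K.
  rewrite expnMn (_ : 3 ^ 2 = 9) //; lia.
have LL : L.+1 * 2 ^ L <= q ^ m.
  by rewrite /q -expnM -/L (_ : 4 = 2 * 2) // expnMn leq_mul2r ltn_expl ?orbT.
have h4 : T ^ m * K ^ m <= 10 ^ m * (m ^ m * m ^ m).
  rewrite -expnMn -expnD addnn -mul2n expnM -expnMn leq_exp2r //.
have := @chain_ineq _ _ _ _ _ _ _ _ (pow_fact m) (bin_fact_le T m) H h4.

move=> h0.
have h : K ^ m <= 4 ^ m * (L.+1 * 2 ^ L) * 10 ^ m.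
  by rewrite -(@leq_pmul2r (m ^ m * m ^ m)) ?muln_gt0 ?expn_gt0 ?m0 // mulnC.
move: h; rewrite /K expnMn => h.
have : 4 ^ m * (L.+1 * 2 ^ L) * 10 ^ m <= 40 ^ m * q ^ m.
  rewrite (_ : 40 = 4 * 10) // expnMn mulnAC leq_mul2l; apply/orP; right.
  exact: LL.
move=> h'; have := leq_trans h h'.
rewrite -!expnMn leqNgt ltn_exp2r // ltn_mul2r.
by rewrite expn_gt0.
Qed.

Definition nn k := 3 * k.+1.
Lemma nn_gt0 k : 0 < nn k. Proof. by rewrite /nn muln_gt0. Qed.
Definition v0 k : 'I_(nn k) := Ordinal (nn_gt0 k).
Definition nd k (x : nat) : 'I_(nn k) := insubd (v0 k) x.
Definition gi k (g : {ffun 'I_k.+1 -> 'I_k.+1}) (x : nat) : nat := g (inord x).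
Definition degN k (u : nat) := if u < 2 * k.+1 then k.+1 else 2.
Definition nbrN k (g : {ffun 'I_k.+1 -> 'I_k.+1}) (u p : nat) : nat :=
  if u < k.+1 then (if p == gi g u then 2 * k.+1 + u else k.+1 + p)
  else if u < 2 * k.+1 then (if gi g p == u - k.+1 then 2 * k.+1 + p else p)
  else (if p == 0 then u - 2 * k.+1 else k.+1 + gi g (u - 2 * k.+1)).
Definition backN k (g : {ffun 'I_k.+1 -> 'I_k.+1}) (u p : nat) : nat :=
  if u < k.+1 then (if p == gi g u then 0 else u)
  else if u < 2 * k.+1 then (if gi g p == u - k.+1 then 1 else u - k.+1)
  else (if p == 0 then gi g (u - 2 * k.+1) else u - 2 * k.+1).

Lemma gi_lt k (g : {ffun 'I_k.+1 -> 'I_k.+1}) x : @gi k g x < k.+1. Proof. exact: ltn_ord. Qed.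

Ltac crush := rewrite /nbrN /backN /degN /nn; repeat (rewrite ?addKn; let H := fresh "H" in case: ifP => /= H); try lia.

Lemma nbrA k (g : {ffun 'I_k.+1 -> 'I_k.+1}) u p : u < k.+1 ->
  nbrN g u p = (if p == gi g u then 2 * k.+1 + u else k.+1 + p) /\
  backN g u p = (if p == gi g u then 0 else u).
Proof. by move=> h; rewrite /nbrN /backN h. Qed.
Lemma nbrB k (g : {ffun 'I_k.+1 -> 'I_k.+1}) u p : k.+1 <= u < 2 * k.+1 ->
  nbrN g u p = (if gi g p == u - k.+1 then 2 * k.+1 + p else p) /\
  backN g u p = (if gi g p == u - k.+1 then 1 else u - k.+1).
Proof.
move=> h; have e1 : (u < k.+1) = false by lia.
have e2 : (u < 2 * k.+1) = true by lia.
by rewrite /nbrN /backN e1 e2.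
Qed.
Lemma nbrH k (g : {ffun 'I_k.+1 -> 'I_k.+1}) u p : 2 * k.+1 <= u ->
  nbrN g u p = (if p == 0 then u - 2 * k.+1 else k.+1 + gi g (u - 2 * k.+1)) /\
  backN g u p = (if p == 0 then gi g (u - 2 * k.+1) else u - 2 * k.+1).
Proof.
move=> h; have e1 : (u < k.+1) = false by lia.
have e2 : (u < 2 * k.+1) = false by lia.
by rewrite /nbrN /backN e1 e2.
Qed.

Lemma degN_lt k u p : p < degN k u -> (u < 2 * k.+1 -> p < k.+1) /\ (2 * k.+1 <= u -> p < 2).
Proof. rewrite /degN; case: ifP => ? ?; split=> *; lia. Qed.

Ltac regions k g u p :=
  let ha := fresh "ha" in let hb := fresh "hb" in
  case: (ltnP u k.+1) => ha; [ | case: (ltnP u (2 * k.+1)) => hb];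
  [ case: (nbrA g p ha) => ->; (move=> -> || move=> _); case: (p =P gi g u) => ?
  | case: (nbrB g p (introT andP (conj ha hb))) => ->; (move=> -> || move=> _); case: (gi g p =P u - k.+1) => ?
  | case: (nbrH g p hb) => ->; (move=> -> || move=> _); case: (p =P 0) => ? ].

Lemma wf1N k (g : {ffun 'I_k.+1 -> 'I_k.+1}) u p : u < nn k -> p < degN k u ->
  let w := nbrN g u p in
  [/\ backN g u p < degN k w, nbrN g w (backN g u p) = u & backN g w (backN g u p) = p].
Proof.
move=> hu hp /=; rewrite /nn in hu; case: (degN_lt hp) => hpA hpB {hp}.
have h1 := gi_lt g u; have h2 := gi_lt g p; have h3 := gi_lt g (u - 2 * k.+1).
regions k g u p; split; crush.
Qed.

Lemma wf2N k (g : {ffun 'I_k.+1 -> 'I_k.+1}) u p : u < nn k -> p < degN k u ->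
  nbrN g u p != u.
Proof.
move=> hu hp; rewrite /nn in hu; case: (degN_lt hp) => hpA hpB {hp}.
have h1 := gi_lt g u; have h2 := gi_lt g p; have h3 := gi_lt g (u - 2 * k.+1).
regions k g u p; crush.
Qed.

Lemma wf3N k (g : {ffun 'I_k.+1 -> 'I_k.+1}) u p q : u < nn k -> p < degN k u -> q < degN k u ->
  nbrN g u p = nbrN g u q -> p = q.
Proof.
move=> hu hp hq; rewrite /nn in hu; case: (degN_lt hp) => hpA hpB {hp}.
case: (degN_lt hq) => hqA hqB {hq}.
have h1 := gi_lt g u; have h2 := gi_lt g p; have h3 := gi_lt g (u - 2 * k.+1).
have h4 := gi_lt g q.
regions k g u p; crush.
Qed.

Lemma nbrN_lt k (g : {ffun 'I_k.+1 -> 'I_k.+1}) u p : u < nn k -> p < degN k u -> nbrN g u p < nn k.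
Proof.
move=> hu hp; rewrite /nn in hu *; case: (degN_lt hp) => hpA hpB {hp}.
have h1 := gi_lt g u; have h2 := gi_lt g p; have h3 := gi_lt g (u - 2 * k.+1).
regions k g u p; crush.
Qed.

Definition GG k (g : {ffun 'I_k.+1 -> 'I_k.+1}) : pgraph (nn k) :=
  @PGraph (nn k) (fun u => degN k u) (fun u p => nd k (nbrN g u p)) (fun u p => backN g u p).

Lemma val_nbr k (g : {ffun 'I_k.+1 -> 'I_k.+1}) (u : 'I_(nn k)) p : p < degN k u ->
  val (nbr (GG g) u p) = nbrN g u p.
Proof. by move=> hp; rewrite /= val_insubd nbrN_lt. Qed.

Lemma adj_step n (G : pgraph n) u p : p < deg G u -> adjacent G u (nbr G u p).
Proof. by move=> hp; apply/hasP; exists p; rewrite ?mem_iota ?add0n ?hp. Qed.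

Lemma step_conn n (G : pgraph n) u p w : p < deg G u -> connect (adjacent G) (nbr G u p) w ->
  connect (adjacent G) u w.
Proof. by move=> hp; apply: connect_trans; apply: connect1; apply: adj_step. Qed.

Lemma adj_sym n (G : pgraph n) :
  (forall u p, p < deg G u ->
         [/\ back G u p < deg G (nbr G u p),
             nbr G (nbr G u p) (back G u p) = u &
             back G (nbr G u p) (back G u p) = p]) ->
  symmetric (adjacent G).
Proof.
move=> H.
suff S : forall u w, adjacent G u w -> adjacent G w u.
  by move=> u w; apply/idP/idP; apply: S.
move=> u w /hasP [p]; rewrite mem_iota add0n /= => hp /eqP <-.
case: (H u p hp) => h1 h2 _.
by rewrite -{2}h2; apply: adj_step.
Qed.

Lemma conn0 k (g : {ffun 'I_k.+1 -> 'I_k.+1}) (u : 'I_(nn k)) :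
  connect (adjacent (GG g)) u (v0 k).
Proof.
have H0 : forall w : 'I_(nn k), val w = 0 -> connect (adjacent (GG g)) w (v0 k).
  by move=> w hw; rewrite (_ : w = v0 k) //; apply: val_inj.
have Hh0 : forall w : 'I_(nn k), val w = 2 * k.+1 -> connect (adjacent (GG g)) w (v0 k).
  move=> w hw; have hp : 0 < degN k w by rewrite /degN hw ltnn.
  apply: (@step_conn _ (GG g) w _ _ hp); apply: H0; rewrite val_nbr // hw.
  case: (nbrH g 0 (leqnn _)) => -> _; by rewrite subnn.
have HB : forall w : 'I_(nn k), k.+1 <= val w < 2 * k.+1 -> connect (adjacent (GG g)) w (v0 k).
  move=> w hw; have hp : 0 < degN k w by rewrite /degN; case/andP: hw => _ ->.
  apply: (@step_conn _ (GG g) w _ _ hp).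
  have := val_nbr g hp; case: (nbrB g 0 hw) => -> _.
  case: ifP => _ e; [apply: Hh0 | apply: H0]; by rewrite e ?addn0.
have HH : forall w : 'I_(nn k), 2 * k.+1 <= val w -> connect (adjacent (GG g)) w (v0 k).
  move=> w hw; have hp : 1 < degN k w by rewrite /degN ifF //; apply/negbTE; rewrite -leqNgt.
  apply: (@step_conn _ (GG g) w _ _ hp); apply: HB.
  rewrite val_nbr //; case: (nbrH g 1 hw) => -> _ /=.
  have := gi_lt g (w - 2 * k.+1); lia.
have [ha|ha] := ltnP (val u) k.+1.
  have e2 : (val u < 2 * k.+1) = true by lia.
  have hp : gi g u < degN k u by rewrite /degN e2 gi_lt.
  apply: (@step_conn _ (GG g) u _ _ hp); apply: HH.
  rewrite val_nbr //; case: (nbrA g (gi g u) ha) => -> _; rewrite eqxx; lia.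
have [hb|hb] := ltnP (val u) (2 * k.+1).
  by apply: HB; rewrite ha hb.
exact: HH.
Qed.

Lemma wfGG k (g : {ffun 'I_k.+1 -> 'I_k.+1}) : wf_pgraph (GG g).
Proof.
have W1 : forall (u : 'I_(nn k)) p, p < deg (GG g) u ->
         [/\ back (GG g) u p < deg (GG g) (nbr (GG g) u p),
             nbr (GG g) (nbr (GG g) u p) (back (GG g) u p) = u &
             back (GG g) (nbr (GG g) u p) (back (GG g) u p) = p].
  move=> u p hp /=; have := wf1N g (ltn_ord u) hp => /= [[h1 h2 h3]].
  have e : val (nbr (GG g) u p) = nbrN g u p by rewrite val_nbr.
  have hb : backN g u p < degN k (nd k (nbrN g u p)) by rewrite -[nd _ _]/(nbr (GG g) u p) e.
  split => //.
  - apply: val_inj; rewrite -[nd k (nbrN g (nd k _) _)]/(nbr (GG g) (nbr (GG g) u p) _).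
    by rewrite val_nbr // e.
  - by rewrite -[nd _ _]/(nbr (GG g) u p) e.
split => //.
- move=> u p hp; apply/eqP => /(congr1 val); rewrite val_nbr //; apply/eqP.
  exact: wf2N (ltn_ord u) hp.
- move=> u p q hp hq /(congr1 val); rewrite !val_nbr //.
  exact: wf3N (ltn_ord u) hp hq.
- move=> u w; apply: connect_trans (conn0 g u) _.
  rewrite (sym_connect_sym (adj_sym W1)); exact: conn0.
Qed.

Lemma T1 k (g1 g2 : {ffun 'I_k.+1 -> 'I_k.+1}) u p : u < 2 * k.+1 -> p < k.+1 ->
  2 * k.+1 <= nbrN g1 u p ->
  gi g1 (nbrN g1 u p - 2 * k.+1) = gi g2 (nbrN g1 u p - 2 * k.+1) ->
  nbrN g2 u p = nbrN g1 u p.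
Proof.
move=> hu hp.
have h1 := gi_lt g1 u; have h2 := gi_lt g1 p; have h1' := gi_lt g2 u; have h2' := gi_lt g2 p.
crush.
Qed.

Lemma T2 k (g1 g2 : {ffun 'I_k.+1 -> 'I_k.+1}) u p : u < 2 * k.+1 -> p < k.+1 ->
  nbrN g1 u p = nbrN g2 u p -> 2 * k.+1 <= nbrN g1 u p ->
  gi g1 (nbrN g1 u p - 2 * k.+1) = gi g2 (nbrN g1 u p - 2 * k.+1).
Proof.
move=> hu hp.
have h1 := gi_lt g1 u; have h2 := gi_lt g1 p; have h1' := gi_lt g2 u; have h2' := gi_lt g2 p.
crush.
Qed.

Lemma T3 k (g1 g2 : {ffun 'I_k.+1 -> 'I_k.+1}) u p : u < nn k -> p < degN k u ->
  (2 * k.+1 <= nbrN g1 u p) = (2 * k.+1 <= nbrN g2 u p) ->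
  (2 * k.+1 <= u -> gi g1 (u - 2 * k.+1) = gi g2 (u - 2 * k.+1)) ->
  nbrN g1 u p = nbrN g2 u p /\ backN g1 u p = backN g2 u p.
Proof.
move=> hu hp; rewrite /nn in hu; case: (degN_lt hp) => hpA hpB {hp}.
have h1 := gi_lt g1 u; have h2 := gi_lt g1 p; have h1' := gi_lt g2 u; have h2' := gi_lt g2 p.
have h3 := gi_lt g1 (u - 2 * k.+1); have h3' := gi_lt g2 (u - 2 * k.+1).
crush.
Qed.

Lemma T4 k (g : {ffun 'I_k.+1 -> 'I_k.+1}) u p : u < nn k -> 2 * k.+1 <= u -> nbrN g u p < 2 * k.+1.
Proof.
move=> hu; have h3 := gi_lt g (u - 2 * k.+1); rewrite /nn in hu; crush.
Qed.

Definition adv (f : oracle) k (g : {ffun 'I_k.+1 -> 'I_k.+1}) := f (nn k) (GG g) (v0 k).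
Definition R (A : algorithm) (f : oracle) k (g : {ffun 'I_k.+1 -> 'I_k.+1}) s :=
  run A (adv f g) (GG g) (v0 k) s.
Definition nodeat A f k (g : {ffun 'I_k.+1 -> 'I_k.+1}) s : option 'I_(nn k) :=
  omap fst (R A f g s).
Definition visited A f k (g : {ffun 'I_k.+1 -> 'I_k.+1}) s (w : 'I_(nn k)) :=
  [exists s' : 'I_s.+1, nodeat A f g s' == Some w].
Definition arr A f k (g : {ffun 'I_k.+1 -> 'I_k.+1}) s :=
  if nodeat A f g s.+1 is Some w then (2 * k.+1 <= w) && ~~ visited A f g s w else false.

Lemma R_S A f k (g : {ffun 'I_k.+1 -> 'I_k.+1}) s :
  R A f g s.+1 =
  match R A f g s with
  | None => None
  | Some (u, h) =>
      match A (adv f g) (degN k (v0 k)) h with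
      | None => None
      | Some p => if p < degN k u then
           Some (nd k (nbrN g u p), rcons h (p, backN g u p, degN k (nd k (nbrN g u p))))
           else None
      end
  end.
Proof. by []. Qed.

Lemma visitedS A f k (g : {ffun 'I_k.+1 -> 'I_k.+1}) s w :
  visited A f g s.+1 w = visited A f g s w || (nodeat A f g s.+1 == Some w).
Proof.
apply/existsP/orP.
- case=> s'; have [e|ne] := eqVneq (val s') s.+1.
    by move=> h; right; rewrite -e.
  move=> h; left; apply/existsP.
  have hs : s' < s.+1 by have := ltn_ord s'; rewrite ltnS leq_eqVlt (negbTE ne).
  by exists (Ordinal hs).
- case.
    case/existsP=> s' h.
    have hs : s' < s.+2 by apply: ltn_trans (ltn_ord s') _.
    by exists (Ordinal hs).
  by move=> h; exists ord_max.
Qed.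

Lemma visited_eq A f k (g1 g2 : {ffun 'I_k.+1 -> 'I_k.+1}) s w :
  (forall s', s' <= s -> R A f g1 s' = R A f g2 s') -> visited A f g1 s w = visited A f g2 s w.
Proof.
move=> H; apply: eq_existsb => s'.
by rewrite /nodeat H // -ltnS.
Qed.

Lemma dir k (g1 g2 : {ffun 'I_k.+1 -> 'I_k.+1}) (V : 'I_(nn k) -> bool) (u : 'I_(nn k)) p :
  p < degN k u ->
  (forall x : 'I_(nn k), 2 * k.+1 <= x -> V x -> gi g1 (x - 2 * k.+1) = gi g2 (x - 2 * k.+1)) ->
  (2 * k.+1 <= nbrN g1 u p -> ~~ V (nd k (nbrN g1 u p)) -> 2 * k.+1 <= nbrN g2 u p) ->
  2 * k.+1 <= nbrN g1 u p -> 2 * k.+1 <= nbrN g2 u p.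
Proof.
move=> hp KV AR hx.
have [hu|hu] := ltnP (val u) (2 * k.+1); last first.
  by have := T4 g1 p (ltn_ord u) hu; lia.
have hpm : p < k.+1 by move: hp; rewrite /degN hu.
have ex : val (nd k (nbrN g1 u p)) = nbrN g1 u p by rewrite val_insubd nbrN_lt.
case hV : (V (nd k (nbrN g1 u p))).
  have := KV _ (eq_ind_r (fun y => 2 * k.+1 <= y) hx ex) hV; rewrite ex => e.
  by rewrite (T1 hu hpm hx e).
by apply: AR => //; rewrite hV.
Qed.

Lemma arr_eq A f k (g : {ffun 'I_k.+1 -> 'I_k.+1}) s u h p :
  R A f g s = Some (u, h) -> A (adv f g) (degN k (v0 k)) h = Some p -> p < degN k u ->
  nodeat A f g s.+1 = Some (nd k (nbrN g u p)) /\
  arr A f g s = (2 * k.+1 <= nbrN g u p) && ~~ visited A f g s (nd k (nbrN g u p)).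
Proof.
move=> E EA hp.
have N : nodeat A f g s.+1 = Some (nd k (nbrN g u p)) by rewrite /nodeat R_S E EA hp.
split=> //; rewrite /arr N val_insubd nbrN_lt //; exact: ltn_ord.
Qed.

Lemma Req_ext A f k (g1 g2 : {ffun 'I_k.+1 -> 'I_k.+1}) s :
  (forall s', s' <= s -> R A f g1 s' = R A f g2 s') -> R A f g1 s.+1 = R A f g2 s.+1 ->
  forall s', s' <= s.+1 -> R A f g1 s' = R A f g2 s'.
Proof.
move=> H H1 s'; rewrite leq_eqVlt ltnS; case/orP; [by move/eqP->|exact: H].
Qed.

Lemma sim A f k (g1 g2 : {ffun 'I_k.+1 -> 'I_k.+1}) t :
  adv f g1 = adv f g2 -> (forall s, s < t -> arr A f g1 s = arr A f g2 s) ->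
  forall s, s <= t -> (forall s', s' <= s -> R A f g1 s' = R A f g2 s') /\
   (forall w : 'I_(nn k), 2 * k.+1 <= w -> visited A f g1 s w ->
       gi g1 (w - 2 * k.+1) = gi g2 (w - 2 * k.+1)).
Proof.
move=> Hadv HD; elim=> [_|s IH hs].
  split; first by move=> s'; rewrite leqn0 => /eqP ->.
  move=> w hw /existsP [s'].
  rewrite (_ : val s' = 0); last by case: s' => [[|]].
  rewrite /nodeat /R /= => /eqP [e]; move: hw; rewrite -e /=; lia.
have [Req KV] := IH (ltnW hs).
have hA := HD s hs.
have Rs := Req s (leqnn s).
have NoneCase : R A f g1 s.+1 = None -> R A f g2 s.+1 = None ->
   (forall s', s' <= s.+1 -> R A f g1 s' = R A f g2 s') /\
   (forall w : 'I_(nn k), 2 * k.+1 <= w -> visited A f g1 s.+1 w ->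
       gi g1 (w - 2 * k.+1) = gi g2 (w - 2 * k.+1)).
  move=> N1 N2; split; first by apply: Req_ext => //; rewrite N1 N2.
  move=> w hw; rewrite visitedS /nodeat N1 /= orbF; exact: KV.
case E2: (R A f g2 s) => [[u h]|]; last first.
  by apply: NoneCase; rewrite R_S ?Rs E2.
have E1 : R A f g1 s = Some (u, h) by rewrite Rs.
case EA: (A (adv f g2) (degN k (v0 k)) h) => [p|]; last first.
  by apply: NoneCase; rewrite R_S ?E1 ?E2 ?Hadv EA.
have EA1 : A (adv f g1) (degN k (v0 k)) h = Some p by rewrite Hadv.
case hp: (p < degN k u); last first.
  by apply: NoneCase; rewrite R_S ?E1 ?E2 ?EA ?EA1 hp.
have [N1 a1] := arr_eq E1 EA1 hp.
have [N2 a2] := arr_eq E2 EA hp.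
have Veq : forall w, visited A f g2 s w = visited A f g1 s w.
  by move=> w; rewrite (visited_eq _ Req).
have hid : (2 * k.+1 <= nbrN g1 u p) = (2 * k.+1 <= nbrN g2 u p).
  apply/idP/idP.
  - apply: (dir (V := visited A f g1 s)) => // hx hv.
    have : arr A f g1 s by rewrite a1 hx hv.
    by rewrite hA a2 => /andP [].
  - apply: (dir (V := visited A f g2 s)) => //.
    + by move=> x hx; rewrite Veq => /(KV _ hx) ->.
    + move=> hx hv.
      have : arr A f g2 s by rewrite a2 hx hv.
      by rewrite -hA a1 => /andP [].
have Ku : 2 * k.+1 <= u -> gi g1 (u - 2 * k.+1) = gi g2 (u - 2 * k.+1).
  move=> hu; apply: KV => //; apply/existsP; exists ord_max; by rewrite /nodeat E1.
have [eN eB] := T3 (ltn_ord u) hp hid Ku.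
have Rs1 : R A f g1 s.+1 = R A f g2 s.+1 by rewrite !R_S E1 E2 EA EA1 hp eN eB.
split; first exact: Req_ext.
move=> w hw; rewrite visitedS; case/orP; first exact: KV.
rewrite N1 => /eqP [ew].
have ex : val (nd k (nbrN g1 u p)) = nbrN g1 u p by rewrite val_insubd nbrN_lt //; exact: ltn_ord.
rewrite -ew ex.
have hx : 2 * k.+1 <= nbrN g1 u p by rewrite -ex ew.
have hu : u < 2 * k.+1.
  rewrite ltnNge; apply/negP => hu; have := T4 g1 p (ltn_ord u) hu; lia.
have hpm : p < k.+1 by move: hp; rewrite /degN hu.
exact: T2 hu hpm eN hx.
Qed.

Lemma val_hn k (i : 'I_k.+1) : val (nd k (2 * k.+1 + i)) = 2 * k.+1 + i.
Proof. rewrite val_insubd ifT //; have := ltn_ord i; rewrite /nn; lia. Qed.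

Lemma explores_visited A f k (g : {ffun 'I_k.+1 -> 'I_k.+1}) t w :
  explores_in A (adv f g) (GG g) (v0 k) t -> exists2 s, s <= t & nodeat A f g s = Some w.
Proof.
case=> _ /(_ w) [s [h [hs E]]]; exists s => //.
by rewrite /nodeat /R E.
Qed.

Lemma inj_core A f k (g1 g2 : {ffun 'I_k.+1 -> 'I_k.+1}) t :
  adv f g1 = adv f g2 -> (forall s, s < t -> arr A f g1 s = arr A f g2 s) ->
  explores_in A (adv f g1) (GG g1) (v0 k) t -> g1 = g2.
Proof.
move=> Hadv HD Hex.
have [_ KV] := sim Hadv HD (leqnn t).
apply/ffunP => i; apply: val_inj.
have [s hs Ns] := explores_visited (nd k (2 * k.+1 + i)) Hex.
have V : visited A f g1 t (nd k (2 * k.+1 + i)).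
  apply/existsP; exists (Ordinal (hs : s < t.+1)); by rewrite /= Ns.
have := KV _ _ V; rewrite val_hn addKn /gi inord_val; apply.
by rewrite leq_addr.
Qed.

Definition D A f k (g : {ffun 'I_k.+1 -> 'I_k.+1}) T := [set s : 'I_T | arr A f g s].

Lemma cardD A f k (g : {ffun 'I_k.+1 -> 'I_k.+1}) t T :
  explores_in A (adv f g) (GG g) (v0 k) t -> t < T -> #|D A f g T| = k.+1.
Proof.
move=> Hex tT.
pose phi := fun s : 'I_T => if nodeat A f g s.+1 is Some w then (inord (w - 2 * k.+1) : 'I_k.+1) else ord0.
have arrP : forall s, arr A f g s -> exists w : 'I_(nn k),
    [/\ nodeat A f g s.+1 = Some w, 2 * k.+1 <= w & ~~ visited A f g s w].
  move=> s; rewrite /arr; case: (nodeat A f g s.+1) => [w|] // /andP [h1 h2].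
  by exists w.
have inj : {in D A f g T &, injective phi}.
  move=> s1 s2; rewrite !inE => /arrP [w1 [N1 h1 v1]] /arrP [w2 [N2 h2 v2]].
  rewrite /phi N1 N2 => /(congr1 (@nat_of_ord _)).
  have b1 := ltn_ord w1; have b2 := ltn_ord w2; have nE : nn k = 3 * k.+1 by [].
  have i1 : w1 - 2 * k.+1 < k.+1 by lia.
  have i2 : w2 - 2 * k.+1 < k.+1 by lia.
  rewrite !inordK //.
  move=> e; have ew : w1 = w2 by apply: ord_inj; lia.
  subst w2.
  have [lt|lt|eq] := ltngtP s1 s2; last by apply: ord_inj.
  - move: v2; rewrite /visited; case/existsP; exists (Ordinal (lt : s1.+1 < s2.+1)).
    by rewrite /= N1.
  - move: v1; rewrite /visited; case/existsP; exists (Ordinal (lt : s2.+1 < s1.+1)).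
    by rewrite /= N2.
rewrite -(card_in_imset inj).
suff -> : [set phi x | x in D A f g T] = [set: 'I_k.+1] by rewrite cardsT card_ord.
apply/eqP; rewrite eqEsubset subsetT /=; apply/subsetP => i _.
set w := nd k (2 * k.+1 + i).
have exP : exists s, nodeat A f g s == Some w.
  by have [s _ Ns] := explores_visited w Hex; exists s; rewrite Ns.
case: (ex_minnP exP) => s1 Ns1 mins.
have [s0 hs0 Ns0] := explores_visited w Hex.
have s1le : s1 <= s0 by apply: mins; rewrite Ns0.
case: s1 Ns1 mins s1le => [|s] Ns1 mins s1le.
  move: Ns1; rewrite /nodeat /R /= => /eqP [e].
  have := val_hn i; rewrite -/w -e /=; lia.
have sT : s < T by lia.
apply/imsetP; exists (Ordinal sT).
  rewrite inE /arr /= (eqP Ns1) val_hn leq_addr /=.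
  apply/existsP => [[s' hs']].
  have := mins _ hs'; have := ltn_ord s'; lia.
apply: val_inj; rewrite /phi /= (eqP Ns1) val_hn addKn inordK //.
Qed.
Unset Implicit Arguments.
Import Order.TTheory GRing.Theory Num.Theory.

Lemma real_part (K n t : nat) : 0 < K -> n <= K * t ->
  ((K%:R : rat)^-1 * n%:R <= t%:R)%R.
Proof.
move=> K0 h; rewrite mulrC ler_pdivrMr ?ltr0n // -natrM ler_nat mulnC //.
Qed.

Theorem mainTheorem9 (f : oracle) (A : algorithm) :
  linear_size_oracle f ->
  exists c : rat, (0 < c)%R /\
    forall N : nat, exists n : nat, N <= n /\
      exists (G : pgraph n) (v : 'I_n), wf_pgraph G /\
        forall t : nat, explores_in A (f n G v) G v t ->
          (c * (n ^ 2)%:R <= t%:R)%R.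
Proof.
case=> Cc [N0 Hf].
pose K := 41 * 4 ^ (3 * Cc.+1).
have K0 : 0 < K by rewrite muln_gt0 expn_gt0.
exists ((K%:R : rat)^-1)%R; split; first by rewrite invr_gt0 ltr0n.
move=> N.
pose k := N + N0 + K.
exists (nn k); split; first by rewrite /nn; lia.
pose T := ((nn k) ^ 2 %/ K).+1.
case: (classic (exists g : {ffun 'I_k.+1 -> 'I_k.+1}, forall t,
   explores_in A (adv f g) (GG g) (v0 k) t -> ((K%:R : rat)^-1 * ((nn k) ^ 2)%:R <= t%:R)%R)).
  by case=> g Hg; exists (GG g), (v0 k); split; [exact: wfGG | exact: Hg].
move=> Hno; exfalso.
have Hall : forall g : {ffun 'I_k.+1 -> 'I_k.+1},
    exists2 t, explores_in A (adv f g) (GG g) (v0 k) t & t < T.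
  move=> g; apply: NNPP => hn; apply: Hno; exists g => t Ht.
  apply: real_part => //.
  have tT : T <= t by rewrite leqNgt; apply/negP => lt; apply: hn; exists t.
  by apply: ltnW; apply: (leq_trans (ltn_ceil _ K0)); rewrite mulnC leq_mul2l tT orbT.
pose L := 3 * Cc.+1 * k.+1.
have Hsize : forall g : {ffun 'I_k.+1 -> 'I_k.+1}, size (adv f g) <= L.
  move=> g; apply: (leq_trans (Hf _ _ _ _ (wfGG g))); first by rewrite /nn; lia.
  rewrite /L /nn; nia.
pose Phi := fun g : {ffun 'I_k.+1 -> 'I_k.+1} =>
  ((inord (size (adv f g)) : 'I_L.+1, [ffun i : 'I_L => nth false (adv f g) i]), D A f g T).
have Phi_inj : injective Phi.
  move=> g1 g2 [e1 e2 e3].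
  have [t1 Hex1 tT1] := Hall g1.
  have es : size (adv f g1) = size (adv f g2).
    by move/(congr1 (@nat_of_ord _)): e1; rewrite !inordK // ltnS Hsize.
  have ea : adv f g1 = adv f g2.
    apply: (eq_from_nth (x0 := false) es) => i hi.
    have hiL : i < L by apply: leq_trans hi (Hsize g1).
    by move/ffunP/(_ (Ordinal hiL)): e2; rewrite !ffunE.
  apply: (inj_core ea _ Hex1) => s hs.
  have sT : s < T by apply: ltn_trans hs tT1.
  have E : (Ordinal sT \in D A f g1 T) = (Ordinal sT \in D A f g2 T) by rewrite e3.
  by move: E; rewrite !inE.
pose S' := setX (setX [set: 'I_L.+1] [set: {ffun 'I_L -> bool}]) [set X : {set 'I_T} | #|X| == k.+1].
have sub : [set Phi g | g in [set: {ffun 'I_k.+1 -> 'I_k.+1}]] \subset S'.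
  apply/subsetP => x /imsetP [g _ ->].
  rewrite !inE /=; have [t Hex tT] := Hall g; by rewrite (cardD Hex tT).
have := subset_leq_card sub.
rewrite card_in_imset; last by move=> ? ? _ _; apply: Phi_inj.
rewrite cardsT card_ffun !card_ord !cardsX !cardsT card_ffun card_bool !card_ord card_draws card_ord.
apply/negP; rewrite -ltnNge.
have := @final_ineq Cc k.+1 (ltn0Sn _).
rewrite /T /nn /K /L; apply.
rewrite /K; nia.
Qed.
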